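(* Let $T\subset\mathbb{R}^3$ be the tetrahedron with vertices $(0,0,0)$, $\left(\frac12,0,0\right)$, $\left(0,2+\sqrt2,0\right)$ and $\left(0,0,2-\sqrt2\right)$. Then for every positive integer $t$, \[ \#(tT\cap\mathbb{Z}^3)=\frac16t^3+t^2+\frac{11}{6}t+1. \] *)

(* Defs.v *)
From Stdlib Require Export Reals ZArith List.
Export ListNotations.
Open Scope R_scope.

Definition pt := (R * R * R)%type.

Definition v0 : pt := (0, 0, 0).
Definition v1 : pt := (1/2, 0, 0).
Definition v2 : pt := (0, 2 + sqrt 2, 0).
Definition v3 : pt := (0, 0, 2 - sqrt 2).

Definition comb4 (l0 l1 l2 l3 : R) (a b c d : pt) : pt :=
  let '(a1,a2,a3) := a in let '(b1,b2,b3) := b in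
  let '(c1,c2,c3) := c in let '(d1,d2,d3) := d in
  (l0*a1 + l1*b1 + l2*c1 + l3*d1,
   l0*a2 + l1*b2 + l2*c2 + l3*d2,
   l0*a3 + l1*b3 + l2*c3 + l3*d3).

Definition in_T (p : pt) : Prop :=
  exists l0 l1 l2 l3 : R,
    0 <= l0 /\ 0 <= l1 /\ 0 <= l2 /\ 0 <= l3 /\ l0 + l1 + l2 + l3 = 1 /\
    p = comb4 l0 l1 l2 l3 v0 v1 v2 v3.

Definition in_dilate (t : R) (p : pt) : Prop :=
  exists q : pt, in_T q /\
    let '(q1,q2,q3) := q in p = (t*q1, t*q2, t*q3).

Definition Zpt (z : Z * Z * Z) : pt :=
  let '(a,b,c) := z in (IZR a, IZR b, IZR c).

Definition enumerates_lattice_points (t : R) (s : list (Z * Z * Z)) : Prop :=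
  NoDup s /\ forall z, In z s <-> in_dilate t (Zpt z).

(* Main.v *)
Require Import Defs.
From Stdlib Require Import Reals ZArith List Lia Lra Psatz FinFun.
Open Scope R_scope.

Definition s2 := sqrt 2.
Lemma s2sq : s2 * s2 = 2. Proof. unfold s2; apply sqrt_sqrt; lra. Qed.
Lemma s2pos : 0 <= s2. Proof. unfold s2; apply sqrt_pos. Qed.
Lemma s2bnd : 1 < s2 < 3/2. Proof. pose proof s2sq; pose proof s2pos; split; nra. Qed.
Lemma uv : (2 + s2) * (2 - s2) = 2.
Proof. replace ((2+s2)*(2-s2)) with (4 - s2*s2) by ring. rewrite s2sq; ring. Qed.

Fixpoint lsum {A} (f : A -> nat) (l : list A) : nat :=
  match l with nil => 0%nat | a :: l => (f a + lsum f l)%nat end.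

Lemma lsum_app {A} (f : A -> nat) l1 l2 : lsum f (l1 ++ l2) = (lsum f l1 + lsum f l2)%nat.
Proof. induction l1; simpl; lia. Qed.
Lemma lsum_ext {A} (f g : A -> nat) l : (forall a, In a l -> f a = g a) -> lsum f l = lsum g l.
Proof. induction l; simpl; intros H; [auto|]. rewrite H, IHl; auto. Qed.
Lemma lsum_plus {A} (f g : A -> nat) l : lsum (fun a => f a + g a)%nat l = (lsum f l + lsum g l)%nat.
Proof. induction l; simpl; lia. Qed.
Lemma lsum_zero {A} (l : list A) : lsum (fun _ => 0%nat) l = 0%nat.
Proof. induction l; simpl; lia. Qed.
Lemma lsum_map {A B} (f : B -> nat) (g : A -> B) l : lsum f (map g l) = lsum (fun a => f (g a)) l.
Proof. induction l; simpl; lia. Qed.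
Lemma lsum_seqS f n : lsum f (seq 0 (S n)) = (lsum f (seq 0 n) + f n)%nat.
Proof. rewrite seq_S, lsum_app; simpl; lia. Qed.
Lemma lsum_seq_shift f n : lsum f (seq 0 (S n)) = (f 0%nat + lsum (fun k => f (S k)) (seq 0 n))%nat.
Proof. simpl. rewrite <- seq_shift, lsum_map. reflexivity. Qed.
Lemma length_filter_lsum {A} (g : A -> bool) l :
  length (filter g l) = lsum (fun a => if g a then 1%nat else 0%nat) l.
Proof. induction l; simpl; auto. destruct (g a); simpl; lia. Qed.
Lemma lsum_prod {A B} (f : A * B -> nat) l1 l2 :
  lsum f (list_prod l1 l2) = lsum (fun a => lsum (fun b => f (a,b)) l2) l1.
Proof. induction l1; simpl; auto. rewrite lsum_app, lsum_map, IHl1. reflexivity. Qed.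
Lemma NoDup_prod {A B} (l1 : list A) (l2 : list B) : NoDup l1 -> NoDup l2 -> NoDup (list_prod l1 l2).
Proof.
  induction 1 as [|a l1 Ha H1 IH]; intros H2; simpl; [constructor|].
  apply NoDup_app.
  - apply Injective_map_NoDup; auto. intros x y E; now inversion E.
  - auto.
  - intros [x y] Hin Hin2. apply in_map_iff in Hin as [b [E _]]. inversion E; subst.
    apply in_prod_iff in Hin2 as [Hx _]. contradiction.
Qed.

Lemma cnt_interval (f : nat -> nat) lo hi n :
  (forall k, (k < n)%nat -> (f k = 1%nat /\ (lo <= k <= hi)%nat) \/ (f k = 0%nat /\ ~ (lo <= k <= hi)%nat)) ->
  lsum f (seq 0 n) = (Nat.min n (S hi) - lo)%nat.
Proof.
  induction n; intros H; [simpl; lia|].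
  rewrite lsum_seqS, IHn by (intros; apply H; lia).
  destruct (H n) as [[-> ?]|[-> ?]]; lia.
Qed.

Definition indR (a b : R) : nat := if Rle_dec a b then 1%nat else 0%nat.
Lemma indR_ext a b c d : (a <= b <-> c <= d) -> indR a b = indR c d.
Proof. intros H; unfold indR; destruct (Rle_dec a b), (Rle_dec c d); tauto. Qed.
Lemma indR_0 a b : b < a -> indR a b = 0%nat.
Proof. intros; unfold indR; destruct (Rle_dec a b); auto; lra. Qed.

Lemma irr2 : forall b n j, (n <= b)%nat -> (j*j = 2*n*n)%nat -> n = 0%nat.
Proof.
  induction b; intros n j Hb H; [lia|].
  destruct (Nat.Even_or_Odd j) as [[a Ha]|[a Ha]]; subst j.
  - destruct (Nat.Even_or_Odd n) as [[c Hc]|[c Hc]]; subst n.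
    + assert (c = 0%nat) by (apply (IHb c a); lia). lia.
    + lia.
  - lia.
Qed.
Lemma lsum_zero' {A} (f : A -> nat) l : (forall a, In a l -> f a = 0%nat) -> lsum f l = 0%nat.
Proof. intros H. rewrite (lsum_ext f (fun _ => 0%nat)) by auto. apply lsum_zero. Qed.

Definition E (N k : nat) : R := (2 - s2) * INR (N - k) + (2 + s2) * INR (k - N).
Lemma E_nonneg N k : 0 <= E N k.
Proof. unfold E. pose proof s2bnd. pose proof (pos_INR (N-k)). pose proof (pos_INR (k-N)). nra. Qed.

Definition Fw N r := lsum (fun k => lsum (fun w => indR (4*INR w + E N k) r) (seq 0 N)) (seq 0 (2*N+1)).
Definition Bc N r := lsum (fun k => indR (E N k) r) (seq 0 (2*N+1)).
Definition Gx N r := lsum (fun x => Fw N (r - 4*INR x)) (seq 0 N).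

Lemma Fw_neg N r : r < 0 -> Fw N r = 0%nat.
Proof.
  intros Hr. unfold Fw. apply lsum_zero'; intros k _.
  apply lsum_zero'; intros w _.
  apply indR_0. pose proof (E_nonneg N k). pose proof (pos_INR w). lra.
Qed.

Lemma Fw_shift N' r : r < 4 * INR (S N') -> Fw (S N') r = (Fw (S N') (r-4) + Bc (S N') r)%nat.
Proof.
  intros Hr. unfold Fw, Bc. rewrite <- lsum_plus. apply lsum_ext; intros k _.
  rewrite lsum_seq_shift, lsum_seqS.
  rewrite (indR_0 (4 * INR N' + E (S N') k)).
  2:{ rewrite S_INR in Hr. pose proof (E_nonneg (S N') k). lra. }
  replace (indR (4 * INR 0 + E (S N') k) r) with (indR (E (S N') k) r)
    by (apply indR_ext; simpl; lra).
  rewrite (lsum_ext _ (fun w => indR (4 * INR w + E (S N') k) (r - 4))). lia.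
  intros w _. apply indR_ext. rewrite S_INR. lra.
Qed.

Lemma Gx_neg N r : r < 0 -> Gx N r = 0%nat.
Proof.
  intros Hr. unfold Gx. apply lsum_zero'; intros x _.
  apply Fw_neg. pose proof (pos_INR x). lra.
Qed.

Lemma Gx_shift N' r : r < 4 * INR (S N') -> Gx (S N') r = (Gx (S N') (r-4) + Fw (S N') r)%nat.
Proof.
  intros Hr. unfold Gx. rewrite lsum_seq_shift, lsum_seqS.
  rewrite (Fw_neg _ (r - 4 - 4 * INR N')) by (rewrite S_INR in Hr; lra).
  replace (r - 4 * INR 0) with r by (simpl; lra).
  rewrite (lsum_ext _ (fun x => Fw (S N') (r - 4 - 4 * INR x))). lia.
  intros x _. f_equal. rewrite S_INR. lra.
Qed.

Lemma floor_nat a : 0 <= a -> exists p : nat, INR p <= a < INR p + 1.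
Proof.
  intros Ha. destruct (base_Int_part a) as [H1 H2].
  assert (Hz : (0 <= Int_part a)%Z).
  { assert (-1 < Int_part a)%Z by (apply lt_IZR; lra). lia. }
  exists (Z.to_nat (Int_part a)). rewrite INR_IZR_INZ, Z2Nat.id by auto. lra.
Qed.

Lemma floor_le p a e : INR p <= a < INR p + 1 -> (INR e <= a <-> (e <= p)%nat).
Proof.
  intros [H1 H2]; split; intros H.
  - assert (INR e < INR (S p)) by (rewrite S_INR; lra). apply INR_lt in H0. lia.
  - apply le_INR in H. lra.
Qed.

Lemma scale_iff u v e n : 0 < u -> 0 < v -> u * v = 2 -> (u * e <= 2 * n <-> e <= n * v).
Proof.
  intros Hu Hv Huv; split; intros H.
  - assert (H' : v * (u * e) <= v * (2 * n)) by (apply Rmult_le_compat_l; lra).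
    replace (v * (u * e)) with ((u * v) * e) in H' by ring. rewrite Huv in H'. lra.
  - assert (H' : u * e <= u * (n * v)) by (apply Rmult_le_compat_l; lra).
    replace (u * (n * v)) with ((u * v) * n) in H' by ring. rewrite Huv in H'. lra.
Qed.

Lemma Bc_val N' n : (4 * n <= N')%nat ->
  Bc (S N') (2 * INR n) = (if Nat.eqb n 0 then 1 else 4 * n)%nat.
Proof.
  intros Hn. set (N := S N').
  pose proof s2bnd as Hs. pose proof (pos_INR n) as Hn0.
  destruct (floor_nat (INR n * (2 - s2))) as [p Hp]; [nra|].
  destruct (floor_nat (INR n * (2 + s2))) as [q Hq]; [nra|].
  assert (Hn4 : INR n * 4 <= INR N') by (apply le_INR in Hn; rewrite mult_INR in Hn; simpl in Hn; lra).
  assert (Hqle : (q <= N')%nat).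
  { apply INR_le. nra. }
  assert (Hple : (p <= N')%nat).
  { apply INR_le. nra. }
  unfold Bc. rewrite (cnt_interval _ (N - q) (N + p)).
  2:{ intros k Hk. unfold indR. destruct (Rle_dec (E N k) (2 * INR n)) as [H|H]; [left|right]; split; auto.
      - unfold E in H. destruct (Nat.le_gt_cases N k).
        + replace (N - k)%nat with 0%nat in H by lia. rewrite INR_0 in H.
          rewrite Rmult_0_r, Rplus_0_l in H.
          apply (scale_iff (2+s2) (2-s2)) in H; try lra; [|apply uv].
          apply (floor_le p) in H; auto. lia.
        + replace (k - N)%nat with 0%nat in H by lia. rewrite INR_0 in H.
          rewrite Rmult_0_r, Rplus_0_r in H.
          apply (scale_iff (2-s2) (2+s2)) in H; try lra; [|rewrite Rmult_comm; apply uv].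
          apply (floor_le q) in H; auto. lia.
      - intros Hk2. apply H. unfold E. destruct (Nat.le_gt_cases N k).
        + replace (N - k)%nat with 0%nat by lia. rewrite INR_0.
          rewrite Rmult_0_r, Rplus_0_l.
          apply (scale_iff (2+s2) (2-s2)); try lra; [apply uv|].
          apply (floor_le p); auto. lia.
        + replace (k - N)%nat with 0%nat by lia. rewrite INR_0.
          rewrite Rmult_0_r, Rplus_0_r.
          apply (scale_iff (2-s2) (2+s2)); try lra; [rewrite Rmult_comm; apply uv|].
          apply (floor_le q); auto. lia. }
  assert (Hpq : (p + q + 1 = if Nat.eqb n 0 then 1 else 4 * n)%nat).
  { destruct (Nat.eqb_spec n 0) as [->|Hn1].
    - simpl in Hp, Hq. assert (INR p < INR 1) by (simpl; lra). assert (INR q < INR 1) by (simpl; lra).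
      apply INR_lt in H. apply INR_lt in H0. lia.
    - assert (A1 : (p + q <= 4 * n)%nat).
      { apply INR_le. rewrite plus_INR, mult_INR. simpl. lra. }
      assert (A2 : (4 * n < p + q + 2)%nat).
      { apply INR_lt. rewrite !plus_INR, mult_INR. simpl. lra. }
      destruct (Nat.eq_dec (p + q) (4 * n)) as [Heq|Hne]; [|lia].
      exfalso. apply Hn1.
      assert (Hpr : INR p = INR n * (2 - s2)).
      { assert (INR p + INR q = 4 * INR n) by (rewrite <- plus_INR, Heq, mult_INR; simpl; lra). lra. }
      assert (Hp2 : (p <= 2 * n)%nat) by (apply INR_le; rewrite mult_INR; simpl; nra).
      apply (irr2 n n (2 * n - p)); [lia|].
      apply INR_eq. rewrite !mult_INR, minus_INR by auto. rewrite mult_INR. simpl.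
      rewrite Hpr.
      replace ((1 + 1) * INR n - INR n * (2 - s2)) with (INR n * s2) by ring.
      replace (INR n * s2 * (INR n * s2)) with (INR n * INR n * (s2 * s2)) by ring.
      rewrite s2sq. ring. }
  rewrite <- Hpq. unfold N. lia.
Qed.

Lemma FG t : forall n, (n <= t)%nat ->
  Fw (S (4*t+3)) (2*INR n) = ((n+1)*(n+1))%nat /\
  (6 * Gx (S (4*t+3)) (2*INR n) = (n+1)*(n+2)*(n+3))%nat.
Proof.
  intros n. induction n as [n IH] using lt_wf_ind. intros Hn.
  assert (Hr : 2 * INR n < 4 * INR (S (4*t+3))).
  { apply le_INR in Hn. rewrite S_INR, plus_INR, mult_INR. simpl. pose proof (pos_INR t). lra. }
  assert (HB := Bc_val (4*t+3) n ltac:(lia)).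
  assert (HF : Fw (S (4*t+3)) (2*INR n) = ((n+1)*(n+1))%nat).
  { rewrite Fw_shift by auto. rewrite HB.
    destruct n as [|[|m]].
    - rewrite Fw_neg by (simpl; lra). reflexivity.
    - rewrite Fw_neg by (simpl; lra). reflexivity.
    - replace (2 * INR (S (S m)) - 4) with (2 * INR m) by (rewrite !S_INR; ring).
      rewrite (proj1 (IH m ltac:(lia) ltac:(lia))). simpl Nat.eqb. cbv beta iota. nia. }
  split; auto.
  rewrite Gx_shift by auto. rewrite HF.
  destruct n as [|[|m]].
  - rewrite Gx_neg by (simpl; lra). reflexivity.
  - rewrite Gx_neg by (simpl; lra). reflexivity.
  - replace (2 * INR (S (S m)) - 4) with (2 * INR m) by (rewrite !S_INR; ring).
    pose proof (proj2 (IH m ltac:(lia) ltac:(lia))). nia.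
Qed.

Lemma char_dilate (t X Y Z : R) : 0 < t ->
  (in_dilate t (X, Y, Z) <->
   0 <= X /\ 0 <= Y /\ 0 <= Z /\ 4*X + (2 - s2)*Y + (2 + s2)*Z <= 2*t).
Proof.
  intros Ht. pose proof s2bnd as Hs. pose proof s2sq as Hsq. split.
  - intros [[[q1 q2] q3] [[l0 [l1 [l2 [l3 [H0 [H1 [H2 [H3 [Hsum Hq]]]]]]]]] Hp]].
    unfold comb4, v0, v1, v2, v3 in Hq. fold s2 in Hq. inversion Hq; subst. clear Hq.
    inversion Hp; subst. clear Hp.
    repeat split; try (apply Rmult_le_pos; nra).
    replace (4 * (t * (l0 * 0 + l1 * (1 / 2) + l2 * 0 + l3 * 0)) +
      (2 - s2) * (t * (l0 * 0 + l1 * 0 + l2 * (2 + s2) + l3 * 0)) +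
      (2 + s2) * (t * (l0 * 0 + l1 * 0 + l2 * 0 + l3 * (2 - s2))))
      with (2 * t * l1 + t * (l2 + l3) * (4 - s2 * s2)) by field.
    rewrite Hsq. nra.
  - intros [HX [HY [HZ HL]]].
    exists (X / t, Y / t, Z / t). split.
    + exists (1 - (4*X + (2 - s2)*Y + (2 + s2)*Z) / (2*t)), (2*X/t), (Y*(2-s2)/(2*t)), (Z*(2+s2)/(2*t)).
      repeat split.
      * match goal with |- 0 <= 1 - ?a / ?b =>
          assert (a / b <= 1); [apply (Rmult_le_reg_r b); [lra|]; unfold Rdiv;
            rewrite Rmult_assoc, Rinv_l, Rmult_1_r by lra; lra | lra] end.
      * apply Rmult_le_pos; [lra|]. apply Rlt_le, Rinv_0_lt_compat; lra.
      * apply Rmult_le_pos; [nra|]. apply Rlt_le, Rinv_0_lt_compat; lra.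
      * apply Rmult_le_pos; [nra|]. apply Rlt_le, Rinv_0_lt_compat; lra.
      * field. lra.
      * unfold comb4, v0, v1, v2, v3. fold s2. f_equal; [f_equal|].
        -- field; lra.
        -- replace (Y * (2 - s2) / (2 * t) * (2 + s2)) with (Y * (4 - s2*s2) / (2*t)) by (field; lra).
           rewrite Hsq. field; lra.
        -- replace (Z * (2 + s2) / (2 * t) * (2 - s2)) with (Z * (4 - s2*s2) / (2*t)) by (field; lra).
           rewrite Hsq. field; lra.
    + simpl. f_equal; [f_equal|]; field; lra.
Qed.

Definition trip (N : nat) (p : nat * nat * nat) : Z * Z * Z :=
  let '(x, k, w) := p in (Z.of_nat x, Z.of_nat (w + (N - k)), Z.of_nat (w + (k - N))).
Definition good (t N : nat) (p : nat * nat * nat) : bool :=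
  let '(x, k, w) := p in
  if Rle_dec (4 * INR x + 4 * INR w + E N k) (2 * INR t) then true else false.
Definition idx (N : nat) := list_prod (list_prod (seq 0 N) (seq 0 (2*N+1))) (seq 0 N).

Lemma Lform X W A B : 4*X + (2 - s2)*(W + A) + (2 + s2)*(W + B) = 4*X + 4*W + ((2-s2)*A + (2+s2)*B).
Proof. ring. Qed.

Theorem proposition3p4 : forall t : nat, (0 < t)%nat ->
  exists s : list (Z * Z * Z),
    enumerates_lattice_points (INR t) s /\
    INR (length s) = /6 * INR t ^ 3 + INR t ^ 2 + 11/6 * INR t + 1.
Proof.
  intros t Ht. set (N := S (4*t+3)). assert (HN : N = S (4*t+3)) by reflexivity. clearbody N.
  assert (HtR : 0 < INR t) by (apply lt_0_INR; lia).
  pose proof s2bnd as Hs.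
  exists (map (trip N) (filter (good t N) (idx N))).
  split; [split|].
  - apply Injective_map_NoDup.
    + intros [[x k] w] [[x' k'] w'] H. unfold trip in H. injection H as H1 H2 H3. f_equal; [f_equal|]; lia.
    + apply NoDup_filter. unfold idx. repeat apply NoDup_prod; apply seq_NoDup.
  - intros [[a b] c]. split.
    + intros Hin. apply in_map_iff in Hin as [[[x k] w] [Heq Hin]].
      apply filter_In in Hin as [_ Hg]. unfold good in Hg.
      destruct (Rle_dec _ _) as [HL|]; [|discriminate].
      unfold trip in Heq. injection Heq as Ha Hb Hc. subst a b c. unfold Zpt. rewrite <- !INR_IZR_INZ.
      apply char_dilate; auto. rewrite !plus_INR.
      pose proof (pos_INR x). pose proof (pos_INR w). pose proof (pos_INR (N-k)). pose proof (pos_INR (k-N)).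
      repeat split; try lra. rewrite Lform. unfold E in HL. lra.
    + intros H. unfold Zpt in H. apply char_dilate in H as [Ha [Hb [Hc HL]]]; auto.
      apply le_IZR in Ha, Hb, Hc.
      destruct (Z_of_nat_complete a Ha) as [x ->].
      destruct (Z_of_nat_complete b Hb) as [y ->].
      destruct (Z_of_nat_complete c Hc) as [z ->].
      rewrite <- !INR_IZR_INZ in HL.
      pose proof (pos_INR x). pose proof (pos_INR y). pose proof (pos_INR z).
      assert (Hy1 : 0 <= (2 - s2 - 1/2) * INR y) by (apply Rmult_le_pos; lra).
      assert (Hz1 : 0 <= (s2) * INR z) by (apply Rmult_le_pos; lra).
      assert (Hxt : (x <= t)%nat) by (apply INR_le; lra).
      assert (Hyt : (y <= 4*t)%nat) by (apply INR_le; rewrite mult_INR; simpl; lra).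
      assert (Hzt : (z <= t)%nat) by (apply INR_le; lra).
      remember (Nat.min y z) as m. remember (N + z - y)%nat as k.
      apply in_map_iff. exists (x, k, m). split.
      * unfold trip. f_equal; [f_equal|]; f_equal; lia.
      * apply filter_In. split.
        -- unfold idx. apply in_prod_iff; split; [apply in_prod_iff; split|]; apply in_seq; lia.
        -- unfold good. destruct (Rle_dec _ _) as [|HNo]; auto. exfalso. apply HNo.
           replace (INR y) with (INR m + INR (N - k)) in HL by (rewrite <- plus_INR; f_equal; lia).
           replace (INR z) with (INR m + INR (k - N)) in HL by (rewrite <- plus_INR; f_equal; lia).
           rewrite Lform in HL. unfold E. lra.
  - rewrite length_map, length_filter_lsum. unfold idx. rewrite !lsum_prod.
    assert (HG : lsum (fun a => lsum (fun b => lsum (fun b0 => if good t N (a, b, b0) then 1%nat else 0%nat)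
              (seq 0 N)) (seq 0 (2 * N + 1))) (seq 0 N) = Gx N (2 * INR t)).
    { unfold Gx, Fw. apply lsum_ext; intros x _. apply lsum_ext; intros k _. apply lsum_ext; intros w _.
      unfold good, indR. destruct (Rle_dec _ _), (Rle_dec _ _); auto; lra. }
    rewrite HG.
    destruct (FG t t (le_n t)) as [_ H6]. rewrite <- HN in H6.
    set (L := Gx N (2 * INR t)) in *.
    apply (f_equal INR) in H6. rewrite !mult_INR, !plus_INR in H6. simpl in H6.
    assert (HL : INR L = (INR t + 1) * (INR t + (1+1)) * (INR t + (1+1+1)) / 6).
    { rewrite <- H6. field. }
    rewrite HL. field.
Qed.
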